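(* In the Rustichini setting there exists a game-dependent constant $\operatorname{Lip}_\Delta<\infty$ such that for every nonempty $F\in\mathcal F$ and every $x\in\mathcal K$, $$\max_{\pi\in\mathcal N(F)}\Delta(\pi,x)\le\operatorname{Lip}_\Delta\operatorname{dist}_1(x,F).$$
   Context: Rustichini setting: a $k$-action partial monitoring game with finite latent space $\mathcal Z$, loss $\mathcal L:[k]\times\mathcal Z\to[0,1]$, signal $\mathcal S:[k]\times\mathcal Z\to\Sigma$; $\mathcal K$ = probability simplex on $\mathcal Z$ (a subset of $\mathbb R^{\mathcal Z}$); $\Delta_k$ = probability simplex on $[k]$; $\mathcal L(\pi,x)=\sum_{a,z}\pi(a)x(z)\mathcal L(a,z)$; $\mathcal S(a,x)$ = law of $\mathcal S(a,z)$, $z\sim x$; $x\,\mathrm R\,y$ iff $\mathcal S(a,x)=\mathcal S(a,y)$ for all $a$; $\mathcal V(\pi,x)=\sup_{y\,\mathrm R\,x}\mathcal L(\pi,y)$; $\mathcal V_\star(x)=\min_{\pi\in\Delta_k}\mathcal V(\pi,x)$; $\Delta(\pi,x)=\mathcal V(\pi,x)-\mathcal V_\star(x)$. $m$ is the smallest integer with $\mathcal V_\star(x)=\min_{\alpha\in[m]}\mathcal V^m(x)_\alpha$ for some linear $\mathcal V^m:\mathcal K\to\mathbb R^m$; cells $P_\alpha=\{x\in\mathcal K:\mathcal V_\star(x)=\mathcal V^m(x)_\alpha\}$; $\mathcal F=\bigcup_{\alpha\in[m]}\operatorname{faces}(P_\alpha)$. $\mathcal N(x)=\{\pi\in\Delta_k:\Delta(\pi,x)=0\}$;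 for nonempty $F\in\mathcal F$, $\mathcal N(F)=\mathcal N(x)$ for any $x$ in the relative interior of $F$ (this does not depend on the choice of $x$). $\operatorname{dist}_1(x,F)=\min_{y\in F}\|x-y\|_1$. *)

(* Defs.v *)
From HB Require Import structures.
From mathcomp Require Import all_boot all_order all_algebra.
From mathcomp Require Import boolp classical_sets reals.
Set Implicit Arguments. Unset Strict Implicit. Unset Printing Implicit Defensive.
Import Order.TTheory GRing.Theory Num.Theory.
Local Open Scope ring_scope.
Local Open Scope classical_set_scope.

Section Rustichini.
Variables (R : realType) (k : nat) (Z : finType) (Sigma : eqType).
Variables (L : 'I_k -> Z -> R) (S : 'I_k -> Z -> Sigma).

Definition simplex (T : finType) : set (T -> R) :=
  [set x | (forall t, 0 <= x t) /\ \sum_(t : T) x t = 1].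

(* K = simplex Z ; Delta_k = simplex 'I_k *)

Definition lossE (pi : 'I_k -> R) (x : Z -> R) : R :=
  \sum_(a : 'I_k) \sum_(z : Z) pi a * x z * L a z.

(* x R y : the laws of S(a,z), z ~ x and z ~ y, coincide for every action a *)
Definition sig_rel (x y : Z -> R) : Prop :=
  forall (a : 'I_k) (s : Sigma),
    \sum_(z : Z | S a z == s) x z = \sum_(z : Z | S a z == s) y z.

Definition Vfun (pi : 'I_k -> R) (x : Z -> R) : R :=
  sup [set lossE pi y | y in [set y | simplex y /\ sig_rel y x]].

(* V_*(x) = min_{pi in Delta_k} V(pi, x) (the min is attained, so inf = min) *)
Definition Vstar (x : Z -> R) : R :=
  inf [set Vfun pi x | pi in @simplex 'I_k].

Definition Delta (pi : 'I_k -> R) (x : Z -> R) : R := Vfun pi x - Vstar x.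

Definition Nset (x : Z -> R) : set ('I_k -> R) :=
  [set pi | simplex pi /\ Delta pi x = 0].

(* linear maps K -> R^m, given by coefficient vectors c alpha : R^Z *)
Definition linv (m : nat) (c : 'I_m -> Z -> R) (alpha : 'I_m) (x : Z -> R) : R :=
  \sum_(z : Z) c alpha z * x z.

Definition min_repr (m : nat) (c : 'I_m -> Z -> R) : Prop :=
  forall x, simplex x ->
    (exists alpha, Vstar x = linv c alpha x) /\
    (forall beta, Vstar x <= linv c beta x).

Definition minimal_repr (m : nat) (c : 'I_m -> Z -> R) : Prop :=
  min_repr c /\ forall (m' : nat) (c' : 'I_m' -> Z -> R), min_repr c' -> (m <= m')%N.

Definition cell (m : nat) (c : 'I_m -> Z -> R) (alpha : 'I_m) : set (Z -> R) :=
  [set x | simplex x /\ Vstar x = linv c alpha x].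

End Rustichini.

Section Geometry.
Variables (R : realType) (Z : finType).

Definition dotp (a x : Z -> R) : R := \sum_(z : Z) a z * x z.

(* faces of a polytope P: intersections of P with the boundary hyperplane of a
   valid linear inequality (includes the empty face and P itself) *)
Definition face (P F : set (Z -> R)) : Prop :=
  exists (a : Z -> R) (b : R),
    (forall x, P x -> dotp a x <= b) /\ F = [set x | P x /\ dotp a x = b].

Definition aff_hull (F : set (Z -> R)) : set (Z -> R) :=
  [set y | exists (n : nat) (p : 'I_n -> Z -> R) (w : 'I_n -> R),
     (forall i, F (p i)) /\ \sum_(i < n) w i = 1 /\
     forall z, y z = \sum_(i < n) w i * p i z].

Definition norm1 (x : Z -> R) : R := \sum_(z : Z) `|x z|.

Definition relint (F : set (Z -> R)) : set (Z -> R) :=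
  [set x | F x /\ exists eps : R, 0 < eps /\
     forall y, aff_hull F y -> norm1 (fun z => y z - x z) < eps -> F y].

Definition dist1 (x : Z -> R) (F : set (Z -> R)) : R :=
  inf [set norm1 (fun z => x z - y z) | y in F].

End Geometry.

Definition NF (R : realType) (k : nat) (Z : finType) (Sigma : eqType)
  (L : 'I_k -> Z -> R) (S : 'I_k -> Z -> Sigma) (F : set (Z -> R)) : set ('I_k -> R) :=
  [set pi | exists x0, relint F x0 /\ Nset L S x0 pi].

(* Main.v *)
Require Import Defs.
From HB Require Import structures.
From mathcomp Require Import all_boot all_order all_algebra.
From mathcomp Require Import boolp classical_sets reals.
From mathcomp Require Import ring lra.
Import Order.TTheory GRing.Theory Num.Theory.
Set Implicit Arguments. Unset Strict Implicit. Unset Printing Implicit Defensive.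
Local Open Scope ring_scope.

Section Aux.
Variable R : realType.
Lemma ratio_pos (a b : R) : 0 < a * b -> 0 < b / a.
Proof.
move=> h; have an : a != 0 by apply/eqP=> a0; move: h; rewrite a0 mul0r ltxx.
have -> : b / a = (a * b) / (a * a) by field.
apply: divr_gt0 => //. by rewrite lt_neqAle eq_sym mulf_neq0 //= -expr2 sqr_ge0.
Qed.

Definition domr (a b : R) : Prop := (0 <= a /\ a <= b) \/ (b <= a /\ a <= 0).

Lemma coord_step (X E l : R) : 0 < l -> 0 <= E * X -> (X = 0 -> E = 0) ->
  (E != 0 -> l <= X / E) ->
  domr (l * E) X /\ domr (X - l * E) X /\ `|X - l * E| + l * `|E| = `|X|.
Proof.
move=> l0 EX X0 hl.
have [E0|E0] := eqVneq E 0.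
  rewrite E0 mulr0 subr0 normr0 mulr0 addr0.
  case: (lerP 0 X) => hX.
    by split; [left|split; [left|]]; lra.
  by split; [right|split; [right|]]; lra.
have X0' : X != 0 by apply/eqP=> /X0; apply/eqP.
move: (hl E0) => {}hl.
have [Ep|En|Ee] := ltgtP E 0; last by move: E0; rewrite Ee eqxx.
-
  have Xn : X < 0.
    rewrite lt_neqAle X0' /=. by rewrite -(nmulr_rge0 _ Ep).
  have hl' : X <= l * E by rewrite -ler_ndivlMr.
  rewrite (ltr0_norm Xn) (ltr0_norm Ep) ler0_norm; last lra.
  split; [right|split; [right|]]; nra.
- have Xp : 0 < X.
    rewrite lt_neqAle eq_sym X0' /=. by rewrite -(pmulr_rge0 _ En).
  have hl' : l * E <= X by rewrite -ler_pdivlMr.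
  rewrite (gtr0_norm Xp) (gtr0_norm En) ger0_norm; last lra.
  split; [left|split; [left|]]; nra.
Qed.
End Aux.
Section Hoff.
Variables (R : realType) (Z J : finType) (phi : J -> Z -> R).

Definition fj (x : Z -> R) (j : J) : R := \sum_z phi j z * x z.
Definition ext (x : Z -> R) (i : Z + J) : R :=
  match i with inl z => x z | inr j => fj x j end.
Definition supp (x : Z -> R) : {set Z + J} := [set i | ext x i != 0].
Definition nz (x : Z -> R) := supp x != finset.set0.
Definition conf (e x : Z -> R) :=
  forall i, 0 <= ext e i * ext x i /\ (ext x i = 0 -> ext e i = 0).
Definition elem (e : Z -> R) :=
  nz e /\ forall e', nz e' -> supp e' \subset supp e -> supp e \subset supp e'.
Definition fnorm (x : Z -> R) := \sum_j `|fj x j|.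
Definition n1 (x : Z -> R) := \sum_z `|x z|.
Definition lc (a : R) (x : Z -> R) (b : R) (y : Z -> R) := fun z : Z => a * x z + b * y z.

Lemma ext_lc a x b y i : ext (lc a x b y) i = a * ext x i + b * ext y i.
Proof.
case: i => [z|j] //=. rewrite /fj /lc !mulr_sumr -big_split /=.
by apply: eq_bigr => z _; ring.
Qed.

Lemma fj_lc a x b y j : fj (lc a x b y) j = a * fj x j + b * fj y j.
Proof. exact: (ext_lc a x b y (inr j)). Qed.

Lemma in_supp x i : (i \in supp x) = (ext x i != 0).
Proof. by rewrite inE. Qed.

Lemma nnz x : ~~ nz x -> forall i, ext x i = 0.
Proof.
rewrite negbK => /eqP s0 i; apply/eqP; rewrite -[_ == 0]negbK -in_supp s0.
by rewrite inE.
Qed.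

Lemma conf_trans a b c : conf a b -> conf b c -> conf a c.
Proof.
move=> hab hbc i; case: (hab i) => h1 h2; case: (hbc i) => h3 h4.
set A := ext a i in h1 h2 *; set B := ext b i in h1 h2 h3 h4;
set C := ext c i in h3 h4 *.
split; last by move=> /h4 /h2.
have [Bn|Bp|B0] := ltgtP B 0.
- have : A <= 0 by move: h1; rewrite mulrC nmulr_rge0.
  have : C <= 0 by move: h3; rewrite nmulr_rge0.
  nra.
- have : 0 <= A by move: h1; rewrite mulrC pmulr_rge0.
  have : 0 <= C by move: h3; rewrite pmulr_rge0.
  nra.
- by rewrite (h2 B0) mul0r.
Qed.

Lemma reduce_core e e' : nz e' -> supp e' \subset supp e -> ~~ (supp e \subset supp e') ->
  (exists i, 0 < ext e' i * ext e i) ->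
  exists e'', conf e'' e /\ nz e'' /\ (#|supp e''| < #|supp e|)%N.
Proof.
move=> nze' sub nsub [i1 Pi1].
pose P := [pred i | 0 < ext e' i * ext e i].
pose F := fun i => ext e i / ext e' i.
have Pi1' : P i1 by [].
case: (arg_minP F Pi1') => i0 Pi0 Hmin.
set t := F i0.
have t0 : 0 < t by apply: ratio_pos.
have E0' : ext e' i0 != 0 by apply/eqP=> h; move: Pi0; rewrite inE h mul0r ltxx.
have E0 : ext e i0 != 0 by apply/eqP=> h; move: Pi0; rewrite inE h mulr0 ltxx.
have Ez i : ext e i = 0 -> ext e' i = 0.
  move=> h; apply/eqP; rewrite -[_ == 0]negbK -in_supp; apply/negP => /(fintype.subsetP sub).
  by rewrite in_supp h eqxx.
exists (lc 1 e (- t) e').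
have Hx i : ext (lc 1 e (- t) e') i = ext e i - t * ext e' i.
  by rewrite ext_lc mul1r mulNr.
have cf : conf (lc 1 e (- t) e') e.
  move=> i; rewrite Hx; split; last by move=> h; rewrite h (Ez _ h) mulr0 subr0.
  case: (ltrP 0 (ext e' i * ext e i)) => hP.
  - have := Hmin i hP; rewrite /F -/t => ht.
    have E'n : ext e' i != 0 by apply/eqP=> h; move: hP; rewrite h mul0r ltxx.
    have : t * (ext e' i * ext e i) <= ext e i / ext e' i * (ext e' i * ext e i).
      by rewrite ler_wpM2r // ltW.
    have -> : ext e i / ext e' i * (ext e' i * ext e i) = ext e i * ext e i by field.
    nra.
  - nra.
split => //; split.
  apply/negP => /eqP s0.
  have hz i : ext e i = t * ext e' i.
    have hn : ~~ nz (lc 1 e (- t) e') by rewrite /nz s0 eqxx.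
    have := nnz hn i.
    by rewrite Hx => /eqP; rewrite subr_eq0 => /eqP.
  move/negP: nsub; apply; apply/fintype.subsetP => i; rewrite !in_supp hz.
  by rewrite mulf_eq0 negb_or => /andP[].
apply: proper_card; apply/properP; split.
  apply/fintype.subsetP => i; rewrite !in_supp; apply: contra => /eqP h.
  by rewrite Hx h (Ez _ h) mulr0 subr0.
exists i0; first by rewrite in_supp.
rewrite in_supp Hx /t /F negbK; apply/eqP; field; exact: E0'.
Qed.
End Hoff.
Section Hoff2.
Variables (R : realType) (Z J : finType) (phi : J -> Z -> R).
Local Notation ext := (@ext R Z J phi).
Local Notation supp := (@supp R Z J phi).
Local Notation nz := (@nz R Z J phi).
Local Notation conf := (@conf R Z J phi).
Local Notation elem := (@elem R Z J phi).
Local Notation fnorm := (@fnorm R Z J phi).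
Local Notation fj := (@fj R Z J phi).

Lemma reduce e e' : nz e' -> supp e' \subset supp e -> ~~ (supp e \subset supp e') ->
  exists e'', conf e'' e /\ nz e'' /\ (#|supp e''| < #|supp e|)%N.
Proof.
move=> nze' sub nsub.
case/set0Pn: (nze') => i1 hi1.
have hi1' := fintype.subsetP sub _ hi1.
rewrite in_supp in hi1; rewrite in_supp in hi1'.
have := mulf_neq0 hi1 hi1'.
case: (ltrP 0 (ext e' i1 * ext e i1)) => hP hne.
  by apply: (reduce_core nze' sub nsub); exists i1.
pose e2 := lc (-1) e' 0 e'.
have H2 i : ext e2 i = - ext e' i by rewrite ext_lc mul0r addr0 mulN1r.
have S2 : supp e2 = supp e'.
  by apply/setP => i; rewrite !in_supp H2 oppr_eq0.
apply: (@reduce_core _ _ _ _ e e2); rewrite /nz ?S2 //.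
exists i1; rewrite H2 mulNr oppr_gt0 lt_neqAle hne hP //.
Qed.

Lemma conf_refl x : conf x x.
Proof. by move=> i; split => //; rewrite -expr2 sqr_ge0. Qed.

Lemma elem_exists x : nz x -> exists e, elem e /\ conf e x.
Proof.
move=> nzx.
suff H : forall n e, (#|supp e| <= n)%N -> nz e -> conf e x -> exists e, elem e /\ conf e x.
  exact: (H _ x (leqnn _) nzx (conf_refl x)).
elim=> [|n IH] e hn nze cfe.
  by move: nze; rewrite /nz -cards_eq0; move: hn; rewrite leqn0 => ->.
case: (pselect (exists e', nz e' /\ supp e' \subset supp e /\ ~~ (supp e \subset supp e'))).
  case=> e' [nze' [sub nsub]].
  case: (reduce nze' sub nsub) => e'' [cf [nz'' lt]].
  apply: (IH e'') => //; first by rewrite -ltnS (leq_trans lt hn).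
  exact: conf_trans cf cfe.
move=> hno; exists e; split => //; split => // e' nze' sub.
case: (boolP (supp e \subset supp e')) => // nsub.
by exfalso; apply: hno; exists e'.
Qed.

Lemma scale_unique e e' : elem e -> supp e' = supp e ->
  exists c, forall i, ext e' i = c * ext e i.
Proof.
move=> [nze He] S.
case/set0Pn: (nze) => i0 hi0.
have E0 : ext e i0 != 0 by rewrite -in_supp.
pose c := ext e' i0 / ext e i0.
exists c.
pose w := lc 1 e' (- c) e.
have Hw i : ext w i = ext e' i - c * ext e i by rewrite ext_lc mul1r mulNr.
case: (boolP (nz w)) => nzw.
  have sub : supp w \subset supp e.
    apply/fintype.subsetP => i; rewrite !in_supp Hw; apply: contra => /eqP h.
    have : i \notin supp e' by rewrite S in_supp h eqxx.
    by rewrite in_supp negbK h mulr0 subr0.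
  have := fintype.subsetP (He w nzw sub) _ hi0.
  rewrite in_supp Hw /c.
  have -> : ext e' i0 - ext e' i0 / ext e i0 * ext e i0 = 0 by field.
  by rewrite eqxx.
move=> i; have := nnz nzw i.
by rewrite Hw => /eqP; rewrite subr_eq0 => /eqP.
Qed.

Lemma elem_bound : exists C : R, 0 <= C /\
  forall e, elem e -> fnorm e != 0 -> n1 e <= C * fnorm e.
Proof.
pose good (S : {set Z + J}) e := elem e /\ supp e = S /\ fnorm e != 0.
pose rat (S : {set Z + J}) : R :=
  match pselect (exists e, good S e) with
  | left h => n1 (proj1_sig (cid h)) / fnorm (proj1_sig (cid h))
  | right _ => 0 end.
have rat0 S : 0 <= rat S.
  rewrite /rat; case: pselect => // h.
  by apply: divr_ge0; apply: sumr_ge0 => i _; exact: normr_ge0.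
exists (\sum_S rat S); split; first by apply: sumr_ge0.
move=> e ee fe.
have gS : good (supp e) e by [].
have rate : rat (supp e) = n1 e / fnorm e.
  rewrite /rat; case: pselect => [h|]; last by move=> hn; exfalso; apply: hn; exists e.
  case: (cid h) => e0 [ee0 [S0 f0]] /=.
  case: (scale_unique ee0 (esym S0)) => c Hc.
  have n1e : n1 e = `|c| * n1 e0.
    by rewrite /n1 mulr_sumr; apply: eq_bigr => z _; move: (Hc (inl z)) => /= ->; rewrite normrM.
  have fne : fnorm e = `|c| * fnorm e0.
    by rewrite /fnorm mulr_sumr; apply: eq_bigr => j _; rewrite -normrM; move: (Hc (inr j)) => /= ->.
  have c0 : `|c| != 0.
    by apply: contraNneq fe => c0; rewrite fne c0 mul0r.
  by rewrite n1e fne; field; rewrite c0 f0.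
have le1 : rat (supp e) <= \sum_S rat S.
  by rewrite (bigD1 (supp e)) //= lerDl sumr_ge0.
have fpos : 0 < fnorm e.
  by rewrite lt_neqAle eq_sym fe sumr_ge0 // => j _; exact: normr_ge0.
rewrite rate in le1.
have : n1 e = n1 e / fnorm e * fnorm e by field; rewrite gt_eqF.
move=> ->; by rewrite ler_wpM2r // ltW.
Qed.
End Hoff2.
Section Hoff3.
Variables (R : realType) (Z J : finType) (phi : J -> Z -> R).
Local Notation ext := (@ext R Z J phi).
Local Notation supp := (@supp R Z J phi).
Local Notation nz := (@nz R Z J phi).
Local Notation conf := (@conf R Z J phi).
Local Notation elem := (@elem R Z J phi).
Local Notation fnorm := (@fnorm R Z J phi).
Local Notation fj := (@fj R Z J phi).

Lemma domr_refl (a : R) : domr a a.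
Proof. by case: (lerP 0 a) => h; [left|right]; lra. Qed.

Lemma domr_trans (a b c : R) : domr a b -> domr b c -> domr a c.
Proof. rewrite /domr; lra. Qed.

Lemma domr_add (a b X : R) : domr a (X - b) -> domr b X -> domr (X - b) X -> domr (a + b) X.
Proof. rewrite /domr; lra. Qed.

Lemma hoffman : exists C : R, 0 <= C /\ forall x, exists u,
  (forall j, fj u j = fj x j) /\ (forall z, domr (u z) (x z)) /\ n1 u <= C * fnorm x.
Proof.
case: (elem_bound phi) => C [C0 HC]; exists C; split => //.
have fn0 y : 0 <= fnorm y by apply: sumr_ge0 => j _; exact: normr_ge0.
suff H : forall n x, (#|supp x| <= n)%N -> exists u, (forall j, fj u j = fj x j) /\
   (forall z, domr (u z) (x z)) /\ n1 u <= C * fnorm x.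
  by move=> x; apply: (H _ x (leqnn _)).
have base x : ~~ nz x -> exists u, (forall j, fj u j = fj x j) /\
   (forall z, domr (u z) (x z)) /\ n1 u <= C * fnorm x.
  move=> nzx; exists x; split => //; split => [z|]; first exact: domr_refl.
  have -> : n1 x = 0.
    by rewrite /n1 big1 // => z _; move: (nnz nzx (inl z)) => /= ->; rewrite normr0.
  by rewrite mulr_ge0.
elim=> [|n IH] x hn.
  by apply: base; rewrite /nz negbK -cards_eq0 -leqn0.
case: (boolP (nz x)) => nzx; last exact: base.
case: (elem_exists nzx) => e [ee cfe].
have nze := ee.1.
case/set0Pn: (nze) => i1 hi1.
pose F := fun i => ext x i / ext e i.
case: (arg_minP F hi1) => i0 Pi0 Hmin.
set l := F i0.
have E0 : ext e i0 != 0 by rewrite -in_supp.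
have X0 : ext x i0 != 0.
  by apply: contra E0 => /eqP h; apply/eqP; apply: (cfe i0).2.
have l0 : 0 < l.
  apply: ratio_pos; rewrite lt_neqAle eq_sym mulf_neq0 //=; exact: (cfe i0).1.
have CS i := coord_step l0 (cfe i).1 (cfe i).2
   (fun h => Hmin i ltac:(by rewrite -in_supp in h)).
pose x' := lc 1 x (- l) e.
have Hx' i : ext x' i = ext x i - l * ext e i by rewrite ext_lc mul1r mulNr.
have lt : (#|supp x'| < #|supp x|)%N.
  apply: proper_card; apply/properP; split.
    apply/fintype.subsetP => i; rewrite !in_supp Hx'; apply: contra => /eqP h.
    have := (CS i).2.1; rewrite h /domr => hd; apply/eqP; lra.
  exists i0; first by rewrite in_supp.
  rewrite in_supp Hx' /l /F negbK; apply/eqP; field; exact: E0.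
case: (IH x' _) => [|u' [fu' [du' nu']]]; first by rewrite -ltnS (leq_trans lt hn).
have fx' j : fj x' j = fj x j - l * fj e j by rewrite fj_lc mul1r mulNr.
case: (eqVneq (fnorm e) 0) => fe.
  have fe0 j : fj e j = 0.
    by apply/eqP; rewrite -normr_eq0; apply/eqP; apply: (psumr_eq0P _ fe).
  exists u'; split; first by move=> j; rewrite fu' fx' fe0 mulr0 subr0.
  split.
    move=> z; apply: domr_trans (du' z) _.
    by move: (Hx' (inl z)) (CS (inl z)).2.1 => /= ->.
  suff -> : fnorm x = fnorm x' by [].
  by apply: eq_bigr => j _; rewrite fx' fe0 mulr0 subr0.
exists (lc 1 u' l e); split.
  by move=> j; rewrite fj_lc mul1r fu' fx' subrK.
split.
  move=> z; rewrite /lc mul1r.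
  have := (CS (inl z)); rewrite /= => -[h1 [h2 _]].
  apply: domr_add => //; move: (du' z); by move: (Hx' (inl z)) => /= <-.
have Hfn : fnorm x = fnorm x' + l * fnorm e.
  rewrite /fnorm mulr_sumr -big_split /=; apply: eq_bigr => j _.
  by move: (CS (inr j)).2.2 (Hx' (inr j)) => /= <- ->.
have n1le : n1 (lc 1 u' l e) <= n1 u' + l * n1 e.
  rewrite /n1 mulr_sumr -big_split /=; apply: ler_sum => z _.
  rewrite /lc mul1r; apply: le_trans (ler_normD _ _) _.
  by rewrite normrM (gtr0_norm l0).
apply: (le_trans n1le); rewrite Hfn mulrDr.
apply: lerD => //.
rewrite mulrCA; apply: ler_wpM2l; [exact: ltW | exact: HC].
Qed.
End Hoff3.
Section Game.
Variables (R : realType) (k : nat) (Z : finType) (Sigma : eqType)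
  (L : 'I_k -> Z -> R) (S : 'I_k -> Z -> Sigma).

Definition Jt := option ('I_k * Z)%type.
Definition phiG (j : Jt) (z : Z) : R :=
  match j with None => 1 | Some (a, z0) => if S a z == S a z0 then 1 else 0 end.


Lemma fjN x : fj phiG x None = \sum_z x z.
Proof. by apply: eq_bigr => z _; rewrite mul1r. Qed.

Lemma fjS x a z0 : fj phiG x (Some (a, z0)) = \sum_(z | S a z == S a z0) x z.
Proof.
rewrite /fj [RHS]big_mkcond /=; apply: eq_bigr => z _.
by case: ifP; rewrite ?mul1r ?mul0r.
Qed.

Lemma sig_relP x y :
  (forall a z0, fj phiG x (Some (a, z0)) = fj phiG y (Some (a, z0))) -> sig_rel S x y.
Proof.
move=> h a s; case: (pselect (exists z0, S a z0 == s)) => [[z0 /eqP e]|ne].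
  by move: (h a z0); rewrite !fjS e.
by rewrite !big1 // => z /eqP hz; exfalso; apply: ne; exists z; rewrite hz.
Qed.

Lemma sig_relE x y : sig_rel S x y ->
  forall a z0, fj phiG x (Some (a, z0)) = fj phiG y (Some (a, z0)).
Proof. by move=> h a z0; rewrite !fjS h. Qed.

Lemma fnorm_le d : fnorm phiG d <= #|{: Jt}|%:R * norm1 d.
Proof.
have h j : `|fj phiG d j| <= norm1 d.
  apply: le_trans (ler_norm_sum _ _ _) _; apply: ler_sum => z _.
  rewrite normrM ler_piMl // /phiG; case: j => [[a z0]|]; rewrite ?normr1 //.
  by case: ifP; rewrite ?normr1 ?normr0.
apply: le_trans (ler_sum _ (fun j _ => h j)) _.
by rewrite sumr_const mulr_natl.
Qed.

Lemma n1_norm1 (x : Z -> R) : n1 x = norm1 x.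
Proof. by []. Qed.

Lemma norm1_sym (x y : Z -> R) : norm1 (fun z => x z - y z) = norm1 (fun z => y z - x z).
Proof. by apply: eq_bigr => z _; rewrite distrC. Qed.

Lemma fiber : exists K : R, 0 <= K /\ forall x x' y, simplex x' -> simplex y ->
  sig_rel S x' x -> exists y', simplex y' /\ sig_rel S y' y /\
  norm1 (fun z => x' z - y' z) <= K * norm1 (fun z => x z - y z).
Proof.
case: (hoffman phiG) => C [C0 HC].
exists (C * #|{: Jt}|%:R); split; first by rewrite mulr_ge0.
move=> x x' y [x'0 x'1] [y0 y1] rel.
pose d := lc 1 y (-1) x'.
case: (HC d) => u [fu [du nu]].
exists (lc 1 x' 1 u).
have fy' j : fj phiG (lc 1 x' 1 u) j = fj phiG y j.
  by rewrite fj_lc fu /d fj_lc; ring.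
split.
  split.
    move=> z; rewrite /lc; have := du z; rewrite /d /lc /domr.
    by move: (x'0 z) (y0 z); lra.
  by rewrite -fjN fy' fjN.
split; first by apply: sig_relP => a z0; exact: fy'.
have -> : norm1 (fun z => x' z - lc 1 x' 1 u z) = n1 u.
  by apply: eq_bigr => z _; rewrite /lc !mul1r opprD addrA subrr sub0r normrN.
apply: le_trans nu _; rewrite -mulrA; apply: ler_wpM2l => //.
have : fnorm phiG d <= fnorm phiG (lc 1 y (-1) x).
  apply: ler_sum => j _; case: j => [[a z0]|].
    by rewrite /d !fj_lc (sig_relE rel).
  by rewrite /d fj_lc !fjN x'1 y1 !mulr1 subrr normr0 normr_ge0.
move/le_trans; apply; apply: le_trans (fnorm_le _) _.
rewrite norm1_sym; apply: ler_wpM2l => //.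
by rewrite le_eqVlt; apply/orP; left; apply/eqP; apply: eq_bigr => z _; rewrite /lc; congr `|_|; ring.
Qed.
End Game.
Section Game2.
Variables (R : realType) (k : nat) (Z : finType) (Sigma : eqType)
  (L : 'I_k -> Z -> R) (S : 'I_k -> Z -> Sigma).
Local Open Scope classical_set_scope.
Hypothesis hL : forall a z, 0 <= L a z <= 1.

Lemma lossE_lc pi a x b y : lossE L pi (lc a x b y) = a * lossE L pi x + b * lossE L pi y.
Proof.
rewrite /lossE !mulr_sumr -big_split /=; apply: eq_bigr => i _.
rewrite !mulr_sumr -big_split /=; apply: eq_bigr => z _; rewrite /lc; ring.
Qed.

Lemma sum_pi (pi : 'I_k -> R) (x : Z -> R) :
  \sum_a \sum_z pi a * x z = (\sum_a pi a) * (\sum_z x z).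
Proof. by rewrite mulr_suml; apply: eq_bigr => a _; rewrite mulr_sumr. Qed.

Lemma lossE_le1 pi x : simplex pi -> simplex x -> lossE L pi x <= 1.
Proof.
move=> [p0 p1] [x0 x1].
apply: (@le_trans _ _ (\sum_a \sum_z pi a * x z)); last by rewrite sum_pi p1 x1 mulr1.
apply: ler_sum => a _; apply: ler_sum => z _.
by apply: ler_piMr; [rewrite mulr_ge0 | case/andP: (hL a z)].
Qed.

Lemma lossE_ge0 pi x : simplex pi -> simplex x -> 0 <= lossE L pi x.
Proof.
move=> [p0 p1] [x0 x1]; apply: sumr_ge0 => a _; apply: sumr_ge0 => z _.
by rewrite !mulr_ge0 //; case/andP: (hL a z).
Qed.

Lemma lossE_diff pi x y : simplex pi ->
  lossE L pi x - lossE L pi y <= norm1 (fun z => x z - y z).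
Proof.
move=> [p0 p1].
have -> : lossE L pi x - lossE L pi y = lossE L pi (lc 1 x (-1) y).
  by rewrite lossE_lc; ring.
apply: (@le_trans _ _ (\sum_a \sum_z pi a * `|x z - y z|)); last first.
  by rewrite sum_pi p1 mul1r.
apply: ler_sum => a _; apply: ler_sum => z _; rewrite /lc -mulrA ler_wpM2l //.
apply: le_trans (ler_norm _) _; rewrite normrM.
case/andP: (hL a z) => l0 l1; rewrite (ger0_norm l0).
by rewrite mul1r mulN1r; apply: ler_piMr.
Qed.

Definition Es (pi : 'I_k -> R) (x : Z -> R) : set R :=
  [set lossE L pi y | y in [set y : Z -> R | simplex y /\ sig_rel S y x]].

Lemma Es_ub pi x : simplex pi -> has_ubound (Es pi x).
Proof. by move=> hp; exists 1 => v [y [hy _] <-]; exact: lossE_le1. Qed.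

Lemma Es_ne pi x : simplex x -> Es pi x !=set0.
Proof. by move=> hx; exists (lossE L pi x); exists x. Qed.

Lemma Vfun_ge pi x y : simplex pi -> simplex y -> sig_rel S y x ->
  lossE L pi y <= Vfun L S pi x.
Proof. by move=> hp hy r; apply: ub_le_sup; [exact: Es_ub | exists y]. Qed.

Lemma Vfun_le pi x b : simplex x ->
  (forall y, simplex y -> sig_rel S y x -> lossE L pi y <= b) -> Vfun L S pi x <= b.
Proof.
move=> hx h; apply: ge_sup; first exact: Es_ne.
by move=> v [y [hy r] <-]; exact: h.
Qed.

Lemma Vfun_ge0 pi x : simplex pi -> simplex x -> 0 <= Vfun L S pi x.
Proof.
move=> hp hx; apply: le_trans (lossE_ge0 hp hx) _.
by apply: Vfun_ge.
Qed.

Lemma Vstar_le pi x : simplex pi -> simplex x -> Vstar L S x <= Vfun L S pi x.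
Proof.
move=> hp hx; apply: ge_inf; last by exists pi.
by exists 0 => v [p hp' <-]; exact: Vfun_ge0.
Qed.

Lemma Delta_ge0 pi x : simplex pi -> simplex x -> 0 <= Delta L S pi x.
Proof. by move=> hp hx; rewrite /Delta subr_ge0; exact: Vstar_le. Qed.

Lemma Vfun_lip : exists K : R, 0 <= K /\ forall pi x y, simplex pi -> simplex x -> simplex y ->
  Vfun L S pi x <= Vfun L S pi y + K * norm1 (fun z => x z - y z).
Proof.
case: (@fiber R _ _ _ S) => K [K0 HK]; exists K; split => // pi x y hp hx hy.
apply: Vfun_le => // x' hx' r.
case: (HK x x' y hx' hy r) => y' [hy' [r' hn]].
have := lossE_diff x' y' hp; have := Vfun_ge hp hy' r'.
move: hn; lra.
Qed.

Lemma simplex_lc (t : R) (p q : Z -> R) : 0 <= t <= 1 -> simplex p -> simplex q -> simplex (lc t p (1 - t) q).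
Proof.
move=> /andP[t0 t1] [p0 p1] [q0 q1]; split.
  by move=> z; rewrite /lc addr_ge0 // mulr_ge0 // subr_ge0.
by rewrite -(@fjN _ _ _ _ S) fj_lc !fjN p1 q1; ring.
Qed.

Lemma sig_rel_lc (t : R) (p q p' q' : Z -> R) : sig_rel S p' p -> sig_rel S q' q ->
  sig_rel S (lc t p' (1 - t) q') (lc t p (1 - t) q).
Proof.
move=> rp rq; apply: sig_relP => a z0.
by rewrite !fj_lc (sig_relE rp) (sig_relE rq).
Qed.

Lemma Vfun_concave pi (p q : Z -> R) (t : R) : simplex pi -> simplex p -> simplex q -> 0 < t < 1 ->
  t * Vfun L S pi p + (1 - t) * Vfun L S pi q <= Vfun L S pi (lc t p (1 - t) q).
Proof.
move=> hpi hp hq /andP[t0 t1].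
set M := Vfun L S pi (lc t p (1 - t) q).
have tt : 0 <= t <= 1 by rewrite ltW //= ltW.
have key p' q' : simplex p' -> sig_rel S p' p -> simplex q' -> sig_rel S q' q ->
    t * lossE L pi p' + (1 - t) * lossE L pi q' <= M.
  move=> hp' rp hq' rq; rewrite -lossE_lc; apply: Vfun_ge => //.
    exact: simplex_lc.
  exact: sig_rel_lc.
have t1' : 0 < 1 - t by rewrite subr_gt0.
have step1 q' : simplex q' -> sig_rel S q' q ->
    t * Vfun L S pi p <= M - (1 - t) * lossE L pi q'.
  move=> hq' rq.
  have : Vfun L S pi p <= (M - (1 - t) * lossE L pi q') / t.
    apply: Vfun_le => // p' hp' rp; rewrite ler_pdivlMr // mulrC.
    by have := key _ _ hp' rp hq' rq; lra.
  by rewrite ler_pdivlMr // mulrC.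
have : Vfun L S pi q <= (M - t * Vfun L S pi p) / (1 - t).
  apply: Vfun_le => // q' hq' rq; rewrite ler_pdivlMr // mulrC.
  by have := step1 _ hq' rq; lra.
by rewrite ler_pdivlMr // => h; lra.
Qed.
End Game2.
Section Game3.
Variables (R : realType) (k : nat) (Z : finType) (Sigma : eqType)
  (L : 'I_k -> Z -> R) (S : 'I_k -> Z -> Sigma).
Local Open Scope classical_set_scope.
Hypothesis hL : forall a z, 0 <= L a z <= 1.
Variables (m : nat) (c : 'I_m -> Z -> R).
Hypothesis hc : min_repr L S c.

Lemma le_sum1 (T : finType) (F : T -> R) (i0 : T) : (forall i, 0 <= F i) -> F i0 <= \sum_i F i.
Proof. by move=> h; rewrite (bigD1 i0) //= lerDl sumr_ge0. Qed.

Lemma linv_lc al a x b y : linv c al (lc a x b y) = a * linv c al x + b * linv c al y.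
Proof.
rewrite /linv !mulr_sumr -big_split /=; apply: eq_bigr => z _; rewrite /lc; ring.
Qed.

Lemma Vstar_lip : exists Cc : R, 0 <= Cc /\ forall x y, simplex x -> simplex y ->
  Vstar L S y <= Vstar L S x + Cc * norm1 (fun z => x z - y z).
Proof.
exists (\sum_al \sum_z `|c al z|); split.
  by apply: sumr_ge0 => al _; apply: sumr_ge0 => z _; exact: normr_ge0.
move=> x y hx hy.
case: (hc hx) => [[al ->] _].
have h2 := (hc hy).2 al.
apply: (le_trans h2).
have -> : linv c al y = linv c al x + linv c al (lc 1 y (-1) x).
  by rewrite linv_lc; ring.
rewrite lerD2l /linv mulr_sumr; apply: ler_sum => z _.
apply: le_trans (ler_norm _) _; rewrite normrM /lc mul1r mulN1r distrC.
apply: ler_wpM2r; first exact: normr_ge0.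
have hA : `|c al z| <= \sum_z' `|c al z'|.
  by apply: (@le_sum1 _ (fun z => `|c al z|) z) => i; exact: normr_ge0.
have hB : \sum_z' `|c al z'| <= \sum_al' \sum_z' `|c al' z'|.
  apply: (@le_sum1 _ (fun al => \sum_z `|c al z|) al) => i.
  by apply: sumr_ge0 => z' _; exact: normr_ge0.
exact: le_trans hA hB.
Qed.

Lemma Delta_face (al : 'I_m) (F : set (Z -> R)) x0 pi y :
  face (cell L S c al) F -> relint F x0 -> simplex pi -> Delta L S pi x0 = 0 -> F y ->
  Delta L S pi y = 0.
Proof.
move=> [a [b [_ EF]]] [Fx0 [eps [eps0 Heps]]] hpi hD0 Fy.
have Fcell w : F w -> cell L S c al w by rewrite EF => -[].
pose N := norm1 (fun z => x0 z - y z).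
have N0 : 0 <= N by apply: sumr_ge0 => z _; exact: normr_ge0.
pose ep := eps / (N + 1).
have ep0 : 0 < ep by rewrite divr_gt0 // ltr_wpDl.
have epN : ep * N < eps.
  rewrite /ep mulrAC ltr_pdivrMr ?ltr_wpDl //.
  by rewrite mulrDr mulr1 ltrDl.
pose e := lc (1 + ep) x0 (- ep) y.
have Fe : F e.
  apply: Heps.
    exists 2%N, (fun i : 'I_2 => if val i == 0%N then x0 else y),
      (fun i : 'I_2 => if val i == 0%N then 1 + ep else - ep).
    split; first by move=> i; case: ifP.
    split; first by rewrite big_ord_recl big_ord1 /=; ring.
    by move=> z; rewrite big_ord_recl big_ord1 /= /e /lc.
  apply: le_lt_trans epN; rewrite /N mulr_sumr le_eqVlt; apply/orP; left; apply/eqP.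
  apply: eq_bigr => z _; rewrite /e /lc.
  have -> : (1 + ep) * x0 z + - ep * y z - x0 z = ep * (x0 z - y z) by ring.
  by rewrite normrM gtr0_norm.
have [[hse Ve] [hsy Vy]] := (Fcell _ Fe, Fcell _ Fy).
have [hsx0 Vx0] := Fcell _ Fx0.
pose t := 1 / (1 + ep).
have ep1 : 0 < 1 + ep by rewrite ltr_wpDr // ltW.
have t0 : 0 < t by rewrite divr_gt0.
have t1 : t < 1 by rewrite /t ltr_pdivrMr // mul1r ltrDl.
have Ex0 : x0 = lc t e (1 - t) y.
  apply: funext => z; rewrite /lc /e /lc /t; field.
  by rewrite gt_eqF.
have conc := @Vfun_concave _ _ _ _ L S hL pi e y t hpi hse hsy ltac:(by rewrite t0 t1).
rewrite -Ex0 in conc.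
have Vs : Vstar L S x0 = t * Vstar L S e + (1 - t) * Vstar L S y.
  by rewrite Vx0 Ve Vy {1}Ex0 linv_lc.
have De := Delta_ge0 S hL hpi hse.
have Dy := Delta_ge0 S hL hpi hsy.
move: hD0 De Dy conc Vs; rewrite /Delta => hD0 De Dy conc Vs.
apply/eqP; rewrite eq_le; apply/andP; split => //.
have h1 : 0 <= t * (Vfun L S pi e - Vstar L S e) by rewrite mulr_ge0 // ltW.
have h2 : (1 - t) * (Vfun L S pi y - Vstar L S y) <= 0 by nra.
by move: h2; rewrite pmulr_rle0 // subr_gt0.
Qed.
End Game3.

Local Open Scope classical_set_scope.

Theorem lemma9 (R : realType) (k : nat) (Z : finType) (Sigma : eqType)
  (L : 'I_k -> Z -> R) (S : 'I_k -> Z -> Sigma)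
  (hL : forall a z, 0 <= L a z <= 1)
  (m : nat) (c : 'I_m -> Z -> R) (hc : minimal_repr L S c) :
  exists Lip : R,
    forall (alpha : 'I_m) (F : set (Z -> R)),
      face (cell L S c alpha) F -> F !=set0 ->
      forall x : Z -> R, simplex x ->
      forall pi : 'I_k -> R, NF L S F pi ->
        Delta L S pi x <= Lip * dist1 x F.
Proof.
case: (Vfun_lip S hL) => K [K0 HK].
case: (Vstar_lip hc.1) => Cc [Cc0 HCc].
exists (K + Cc + 1) => al F hF [y0 Fy0] x hx pi [x0 [rx0 [hpi hD0]]].
have Lp : 0 < K + Cc + 1 by rewrite ltr_wpDl // addr_ge0.
have Fs w : F w -> simplex w.
  by move: hF => [a [b [_ EF]]]; rewrite EF => -[[]].
have key y : F y -> Delta L S pi x <= (K + Cc + 1) * norm1 (fun z => x z - y z).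
  move=> Fy.
  have Dy := Delta_face hL hF rx0 hpi hD0 Fy.
  have h1 := HK pi x y hpi hx (Fs _ Fy).
  have h2 := HCc x y hx (Fs _ Fy).
  have n0 : 0 <= norm1 (fun z => x z - y z) by apply: sumr_ge0 => z _; exact: normr_ge0.
  move: Dy; rewrite /Delta => Dy; nra.
have : Delta L S pi x / (K + Cc + 1) <= dist1 x F.
  apply: lb_le_inf.
    by exists (norm1 (fun z => x z - y0 z)); exists y0.
  move=> v [y Fy <-]; rewrite ler_pdivrMr // mulrC; exact: key.
by rewrite ler_pdivrMr // mulrC.
Qed.
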